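(* Let $(G_1^p,G_2^p)$ be a pair of twin polymer graphs. Then the Weisfeiler–Lehman (WL) test cannot distinguish $G_1^p$ and $G_2^p$: at every iteration of WL color refinement, the multiset of colors of the nodes in one period of $G_1^p$ equals the multiset of colors of the nodes in one period of $G_2^p$.
   Context: A monomer graph is $G=(V,E,\mathbf{X})$ with atoms $V=\{v_0,\dots,v_{n-1}\}$, bonds $E$, atom features $\mathbf{x}_i$, and boundary atoms $v_0,v_{n-1}$. Its polymer graph $G^p$ has nodes $v^p_i$, $i\in\mathbb{Z}$, with $v^p_i$ carrying the features of $v_{i\bmod n}$, and edges $(v^p_{kn+a},v^p_{kn+b})$ for all $k\in\mathbb{Z}$ and $(v_a,v_b)\in E$, plus $(v^p_{kn-1},v^p_{kn})$ for all $k\in\mathbb{Z}$. Its induced star-linking graph $G^*$ has node set $V$, edge set $E\cup\{(v_0,v_{n-1})\}$ and the same features. Two polymers with monomer graphs $G_1,G_2$ and polymer graphs $G_1^p\ne G_2^p$ (non-isomorphic) form a pair of twin polymer graphs if their induced star-linking graphs coincide, $G_1^*=G_2^*$ (i.e. are isomorphic as node-attributed graphs). The WL test initializes node colors by node features and iteratively recolors each node by (a hash of) its current color together with the multiset of its neighbors' colors; colors on a polymer graph are periodic, and one period of $G^p$ is the node set $\{v^p_0,\dots,v^p_{n-1}\}$. *)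

(* Defs.v *)
From mathcomp Require Import all_boot all_order all_algebra.
Unset Printing Implicit Defensive.
Import GRing.Theory Num.Theory.

(* A monomer graph with msz.+1 atoms v_0 .. v_msz (so at least one atom);
   v_0 = ord0 and v_{n-1} = ord_max are the boundary atoms.
   Bonds are given by a relation on atoms, features by a function. *)
Record monomer (F : Type) := Monomer {
  msz : nat;
  bonds : rel 'I_msz.+1;
  feat : 'I_msz.+1 -> F }.
Arguments msz {F} m : rename.
Arguments bonds {F} m : rename.
Arguments feat {F} m : rename.

Definition monomer_wf {F : Type} (G : monomer F) : Prop :=
  symmetric (bonds G) /\ irreflexive (bonds G).

(* Edge multiplicities of G^* : the bonds E plus the extra edge (v_0,v_{n-1}).
   (Counted as a multigraph; when (v_0,v_{n-1}) is not a bond this is the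
   simple graph with edge set E ∪ {(v_0,v_{n-1})}.) *)
Definition star_mult {F : Type} (G : monomer F) (a b : 'I_(msz G).+1) : nat :=
  bonds G a b + (((a == ord0) && (b == ord_max)) || ((a == ord_max) && (b == ord0))).

Definition star_iso {F : Type} (G1 G2 : monomer F) : Prop :=
  exists s : 'I_(msz G1).+1 -> 'I_(msz G2).+1,
    bijective s /\
    (forall a, feat G2 (s a) = feat G1 a) /\
    (forall a b, star_mult G2 (s a) (s b) = star_mult G1 a b).

(* node v^p_i, i : int, corresponds to atom (i mod n) of period (i div n) *)
Definition atom {F : Type} (G : monomer F) (i : int) : 'I_(msz G).+1 :=
  inord (absz (i %% (msz G).+1)%Z).
Definition period {F : Type} (G : monomer F) (i : int) : int :=
  (i %/ (msz G).+1)%Z.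

Definition pfeat {F : Type} (G : monomer F) (i : int) : F := feat G (atom G i).

(* adjacency in G^p: (v^p_{kn+a}, v^p_{kn+b}) for bonds (v_a,v_b), and
   (v^p_{kn-1}, v^p_{kn}) for all k (undirected). *)
Definition padj {F : Type} (G : monomer F) (i j : int) : bool :=
  ((period G i == period G j) && bonds G (atom G i) (atom G j))
  || ((j == i + 1)%R && (atom G j == ord0))
  || ((i == j + 1)%R && (atom G i == ord0)).

Definition poly_iso {F : Type} (G1 G2 : monomer F) : Prop :=
  exists phi : int -> int,
    bijective phi /\
    (forall i, pfeat G2 (phi i) = pfeat G1 i) /\
    (forall i j, padj G2 (phi i) (phi j) = padj G1 i j).

Definition twin_polymers {F : Type} (G1 G2 : monomer F) : Prop :=
  star_iso G1 G2 /\ ~ poly_iso G1 G2.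

(* All neighbours of v^p_i lie within distance n of i; the neighbour list is
   the list of j in the window [i-n, i+n] adjacent to i (no repetitions). *)
Definition pneighbors {F : Type} (G : monomer F) (i : int) : seq int :=
  [seq j <- [seq (i + (k%:Z - (msz G).+1%:Z))%R | k <- iota 0 (2 * (msz G).+1).+1]
   | padj G i j].

(* WL colours with colour type C, initial colouring [init] of features and
   hash [h] of (own colour, list of neighbour colours); [h] is required to
   depend only on the multiset of neighbour colours. *)
Fixpoint wl {F : Type} {C : Type} (init : F -> C) (h : C -> seq C -> C)
    (G : monomer F) (t : nat) (i : int) : C :=
  match t with
  | 0 => init (pfeat G i)
  | t'.+1 => h (wl init h G t' i) [seq wl init h G t' j | j <- pneighbors G i]
  end.

Definition multiset_hash {C : eqType} (h : C -> seq C -> C) : Prop :=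
  forall c s1 s2, perm_eq s1 s2 -> h c s1 = h c s2.

Definition period_colors {F : Type} {C : Type} (init : F -> C)
    (h : C -> seq C -> C) (G : monomer F) (t : nat) : seq C :=
  [seq wl init h G t k%:Z | k <- iota 0 (msz G).+1].

(* Main.v *)
Require Import Defs.
From mathcomp Require Import all_boot all_order all_algebra zify.
Import GRing.Theory Num.Theory.

Section S.
Variable F : Type.
Implicit Type G : monomer F.

Lemma atom_val G j : ((atom G j : nat)%:Z = (j %% (msz G).+1%:Z)%Z)%R.
Proof.
rewrite /atom inordK.
  by rewrite gez0_abs // modz_ge0.
have := ltz_pmod j (isT : (0 < (msz G).+1%:Z)%R).
have := modz_ge0 j (isT : ((msz G).+1%:Z != 0)%R).
lia.
Qed.

Lemma decomp G j : j = (period G j * (msz G).+1%:Z + (atom G j : nat)%:Z)%R.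
Proof. by rewrite atom_val /period -divz_eq. Qed.

Lemma atom_lt G j : ((atom G j : nat) < (msz G).+1)%N.
Proof. exact: ltn_ord. Qed.

Lemma char G j p (b : 'I_(msz G).+1) :
  ((atom G j == b) && (period G j == p)) = (j == (p * (msz G).+1%:Z + (b : nat)%:Z)%R).
Proof.
apply/idP/idP.
  by case/andP=> /eqP <- /eqP <-; rewrite -decomp.
move/eqP=> ->.
have hb := ltn_ord b.
have hm : (((p * (msz G).+1%:Z + (b : nat)%:Z) %% (msz G).+1%:Z)%Z = (b:nat)%:Z)%R.
  by rewrite modzMDl modz_small //; apply/andP; split => //.
apply/andP; split.
  apply/eqP/val_inj => /=; rewrite /atom inordK; rewrite hm //.
rewrite /period divzMDl // divz_small ?addr0 //.
Qed.
Definition gk G (i : int) (k : nat) : int := (i + (k%:Z - (msz G).+1%:Z))%R.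

Lemma D1 G i (b : 'I_(msz G).+1) k :
  [&& period G (gk G i k) == period G i, bonds G (atom G i) (atom G (gk G i k)) & atom G (gk G i k) == b]
  = (k == (b + (msz G).+1 - atom G i)%N) && bonds G (atom G i) b.
Proof.
have hi := decomp G i; have ha := atom_lt G i; have hb := ltn_ord b.
apply/idP/idP.
  case/and3P => /eqP Hp Hbd Hb.
  have: (atom G (gk G i k) == b) && (period G (gk G i k) == period G i) by rewrite Hb Hp eqxx.
  rewrite char => /eqP H. rewrite (eqP Hb) in Hbd. rewrite Hbd andbT.
  move: H; rewrite /gk => H.
  apply/eqP. lia.
case/andP => /eqP Hk Hbd.
have: gk G i k == (period G i * (msz G).+1%:Z + (b : nat)%:Z)%R.
  apply/eqP; rewrite /gk. lia.
rewrite -char => /andP[/eqP Ha /eqP Hp].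
by rewrite Ha Hp Hbd !eqxx.
Qed.
Lemma atom_succ G i : (atom G (i + 1)%R == ord0) = (atom G i == ord_max).
Proof.
have hi := decomp G i; have ha := atom_lt G i.
have hj := decomp G (i+1)%R; have hj' := atom_lt G (i+1)%R.
apply/eqP/eqP.
  move=> H; rewrite H /= in hj. apply/val_inj => /=.
  set p := period G (i+1)%R in hj. set q := period G i in hi.
  set a := (atom G i : nat) in hi ha *.
  have hd : ((p - q) * (msz G).+1%:Z = a%:Z + 1)%R by lia.
  set d := (p - q)%R in hd.
  have [hd1|hd1] : (d <= 0 \/ 1 <= d)%R by lia.
    have : (d * (msz G).+1%:Z <= 0)%R by nia.
    lia.
  have [hd2|hd2] : (d = 1 \/ 2 <= d)%R by lia.
    rewrite hd2 in hd. lia.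
  have : (2 * (msz G).+1%:Z <= d * (msz G).+1%:Z)%R by nia.
  lia.
move=> H; rewrite H /= in hi.
have : (atom G (i+1)%R == ord0) && (period G (i+1)%R == period G i + 1)%R.
  rewrite char; apply/eqP => /=. lia.
by case/andP => /eqP.
Qed.
Lemma D2 G i (b : 'I_(msz G).+1) k :
  [&& gk G i k == (i + 1)%R, atom G (gk G i k) == ord0 & atom G (gk G i k) == b]
  = [&& k == (msz G).+2, atom G i == ord_max & b == ord0].
Proof.
apply/idP/idP.
  case/and3P => /eqP H1 H2 /eqP H3.
  rewrite H1 atom_succ in H2. rewrite H2 -H3 H1 atom_succ H2 andbT.
  move: H1; rewrite /gk => H1; apply/eqP; lia.
case/and3P => /eqP Hk H2 /eqP H3.
have H1 : gk G i k = (i + 1)%R by rewrite /gk Hk; lia.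
by rewrite H1 atom_succ H2 H3 eqxx /= atom_succ.
Qed.

Lemma D3 G i (b : 'I_(msz G).+1) k :
  [&& i == (gk G i k + 1)%R, atom G i == ord0 & atom G (gk G i k) == b]
  = [&& k == msz G, atom G i == ord0 & b == ord_max].
Proof.
apply/idP/idP.
  case/and3P => /eqP H1 H2 /eqP H3.
  rewrite H2 -H3 -atom_succ -H1 H2 andbT.
  move: H1; rewrite /gk => H1; apply/eqP; lia.
case/and3P => /eqP Hk H2 /eqP H3.
have H1 : i = (gk G i k + 1)%R by rewrite /gk Hk; lia.
rewrite H2 -H1 eqxx /= H3.
by rewrite -atom_succ -H1.
Qed.
Lemma count_or3 (T : Type) (p1 p2 p3 : pred T) s :
  (forall x, ~~ (p1 x && p2 x)) -> (forall x, ~~ (p1 x && p3 x)) ->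
  (forall x, ~~ (p2 x && p3 x)) ->
  count (fun x => [|| p1 x, p2 x | p3 x]) s = (count p1 s + count p2 s + count p3 s)%N.
Proof.
move=> H12 H13 H23; elim: s => //= x s IH; rewrite IH.
move: (H12 x) (H13 x) (H23 x).
case: (p1 x); case: (p2 x); case: (p3 x) => //= _ _ _; lia.
Qed.

Lemma count_pt k0 (c : bool) m :
  count (fun k => (k == k0) && c) (iota 0 m) = ((k0 < m) && c)%N.
Proof.
case: c.
  rewrite (@eq_count _ _ (pred1 k0)); last by move=> k /=; rewrite andbT.
  by rewrite count_uniq_mem ?iota_uniq // mem_iota add0n andbT.
by rewrite andbF; elim: (iota 0 m) => //= x s ->; rewrite andbF.
Qed.

Lemma count_nb G i (b : 'I_(msz G).+1) :
  (0 < msz G)%N ->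
  count (pred1 b) [seq atom G j | j <- pneighbors G i] = star_mult G (atom G i) b.
Proof.
move=> Hm.
rewrite count_map /pneighbors count_filter count_map.
set a := atom G i.
have ha := ltn_ord a; have hb := ltn_ord b.
rewrite (@eq_count _ _ (fun k => [|| (k == (b + (msz G).+1 - a)%N) && bonds G a b,
   [&& k == (msz G).+2, a == ord_max & b == ord0] | [&& k == msz G, a == ord0 & b == ord_max]])); last first.
  move=> k /=; rewrite -(D1 G i b k) -(D2 G i b k) -(D3 G i b k) /gk /padj.
  rewrite (eq_sym (period G _)).
  case: (_ == period G i); case: (bonds _ _ _); case: (_ == (i+1)%R); case: (atom G (_ + _) == ord0);
  case: (i == _); case: (atom G i == ord0); case: (atom G (_ + _) == b) => //.
rewrite count_or3; first last.
- move=> k /=; apply/negP; case/andP => /and3P[/eqP h1 _ _] /and3P[/eqP h2 _ _]. lia.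
- move=> k /=; apply/negP; case/andP => /andP[/eqP h1 _] /and3P[/eqP h2 /eqP h3 /eqP h4].
  have := congr1 val h3 => /= h3'. have := congr1 val h4 => /= h4'. lia.
- move=> k /=; apply/negP; case/andP => /andP[/eqP h1 _] /and3P[/eqP h2 /eqP h3 _].
  have := congr1 val h3 => /= h3'. lia.
rewrite (count_pt (b + (msz G).+1 - a)) (count_pt (msz G).+2) (count_pt (msz G)).
have -> : (b + (msz G).+1 - a < (2 * (msz G).+1).+1) = true by apply/idP; lia.
have -> : ((msz G).+2 < (2 * (msz G).+1).+1) = true by apply/idP; lia.
have -> : (msz G < (2 * (msz G).+1).+1) = true by apply/idP; lia.
rewrite /star_mult /=.
have hne : (a == ord0) && (a == ord_max) = false.
  apply/negP => /andP[/eqP h1 /eqP h2]; have := congr1 val h1; rewrite h2 /=; lia.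
move: hne; case: (a == ord0); case: (a == ord_max); case: (b == ord0); case: (b == ord_max);
  rewrite /= ?addn0 ?addn1 //.
Qed.
Definition snb G (a : 'I_(msz G).+1) : seq 'I_(msz G).+1 :=
  flatten [seq nseq (star_mult G a b) b | b <- enum 'I_(msz G).+1].

Lemma count_snb G a b : count (pred1 b) (snb G a) = star_mult G a b.
Proof.
rewrite /snb count_flatten sumnE big_map big_map big_enum /= (bigD1 b) //= big1.
  by rewrite count_nseq /= eqxx mul1n addn0.
by move=> b' nb; rewrite count_nseq /= (negbTE nb).
Qed.

Lemma perm_nb G i : (0 < msz G)%N ->
  perm_eq [seq atom G j | j <- pneighbors G i] (snb G (atom G i)).
Proof.
move=> Hm; apply/allP => x _; apply/eqP.
by rewrite count_nb // count_snb.
Qed.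

Variable C : eqType.
Variable init : F -> C.
Variable h : C -> seq C -> C.
Hypothesis hh : multiset_hash h.

Fixpoint sc G t (a : 'I_(msz G).+1) : C :=
  match t with
  | 0 => init (feat G a)
  | t'.+1 => h (sc G t' a) [seq sc G t' b | b <- snb G a]
  end.

Lemma wl_sc G t i : (0 < msz G)%N -> wl init h G t i = sc G t (atom G i).
Proof.
move=> Hm; elim: t i => [|t IH] i //=.
rewrite IH; apply: hh.
rewrite (eq_map IH) (map_comp (sc G t) (atom G)).
exact: perm_map (perm_nb _ _ Hm).
Qed.

Lemma sc_iso G1 G2 (s : 'I_(msz G1).+1 -> 'I_(msz G2).+1) :
  bijective s -> (forall a, feat G2 (s a) = feat G1 a) ->
  (forall a b, star_mult G2 (s a) (s b) = star_mult G1 a b) ->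
  forall t a, sc G2 t (s a) = sc G1 t a.
Proof.
move=> bs hf hm; elim=> [|t IH] a /=; first by rewrite hf.
rewrite IH; apply: hh.
rewrite -(eq_map IH) (map_comp (sc G2 t) s).
apply: perm_map.
have pe : perm_eq (map s (enum 'I_(msz G1).+1)) (enum 'I_(msz G2).+1).
  apply: uniq_perm; first by rewrite map_inj_uniq ?enum_uniq //; exact: bij_inj.
    exact: enum_uniq.
  move=> x; rewrite mem_enum; case: bs => g sg gs.
  by rewrite -(gs x) map_f // mem_enum.
have pe' : forall (T : eqType) (x y : seq T), perm_eq x y -> perm_eq y x by move=> T x y; rewrite perm_sym.
have P1 := perm_flatten (perm_map (fun b => nseq (star_mult G2 (s a) b) b) (pe' _ _ _ pe)).
rewrite /snb (permPl P1).
have -> : [seq nseq (star_mult G2 (s a) b) b | b <- map s (enum 'I_(msz G1).+1)]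
   = [seq map s (nseq (star_mult G1 a b) b) | b <- enum 'I_(msz G1).+1].
  by rewrite -map_comp; apply/eq_map => b /=; rewrite map_nseq hm.
by rewrite map_flatten -map_comp.
Qed.
Lemma pc_sc G t : (0 < msz G)%N ->
  period_colors init h G t = [seq sc G t a | a <- enum 'I_(msz G).+1].
Proof.
move=> Hm; rewrite /period_colors -val_enum_ord -map_comp; apply: eq_map => a /=.
rewrite wl_sc //; congr sc; apply: val_inj => /=.
have := atom_val G (a : nat)%:Z; have := ltn_ord a.
have -> : (((a : nat)%:Z %% (msz G).+1%:Z)%Z = (a : nat)%:Z)%R.
  by rewrite modz_small //; apply/andP; split => //; rewrite ltz_nat.
lia.
Qed.

Fixpoint f1 (x : F) t : C :=
  match t with 0 => init x | t'.+1 => h (f1 x t') [:: f1 x t'; f1 x t'] end.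

Lemma wl_one G t i : msz G = 0%N -> irreflexive (bonds G) ->
  wl init h G t i = f1 (feat G ord0) t.
Proof.
case: G => m bo fe /= Hm irr; subst m.
elim: t i => [|t IH] i /=.
  by rewrite /pfeat /=; case: (atom _ _) => [[]] // p; rewrite (bool_irrelevance p (ltn0Sn 0)).
rewrite IH; congr h.
have E : forall j : int, padj (@Monomer F 0 bo fe) i j = (j == (i - 1)%R) || (j == (i + 1)%R).
  move=> j; rewrite /padj /=.
  have a0 : forall x : 'I_1, x == ord0 by case=> [[]].
  rewrite !a0 !andbT.
  have -> : atom (@Monomer F 0 bo fe) i = atom (@Monomer F 0 bo fe) j.
    by apply: val_inj => /=; case: (atom _ i) => [[]] //; case: (atom _ j) => [[]].
  rewrite irr andbF /=.
  apply/idP/idP => /orP[] /eqP H; apply/orP; (try by left; apply/eqP; lia); right; apply/eqP; lia.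
rewrite /pneighbors /= !E.
rewrite (eq_map IH).
repeat (match goal with |- context [@eq_op ?T ?x ?y] =>
  let H := fresh in
  (have H : (x == y) = true by apply/eqP; lia) ||
  (have H : (x == y) = false by apply/negbTE/eqP; lia); rewrite H end).
by [].

Qed.
End S.

Lemma perm_bij (m1 m2 : nat) (s : 'I_m1 -> 'I_m2) : bijective s ->
  perm_eq (map s (enum 'I_m1)) (enum 'I_m2).
Proof.
move=> bs; apply: uniq_perm; first by rewrite map_inj_uniq ?enum_uniq //; exact: bij_inj.
  exact: enum_uniq.
move=> x; rewrite mem_enum; case: bs => g sg gs.
by rewrite -(gs x) map_f // mem_enum.
Qed.

Theorem lemma1 (F : Type) (G1 G2 : monomer F) :
  monomer_wf G1 -> monomer_wf G2 ->
  twin_polymers G1 G2 ->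
  forall (C : eqType) (init : F -> C) (h : C -> seq C -> C),
    multiset_hash h ->
    forall t : nat, perm_eq (period_colors init h G1 t) (period_colors init h G2 t).
Proof.
move=> [_ irr1] [_ irr2] [[s [bs [hf hm]]] _] C init h hh t.
have hc : msz G1 = msz G2.
  by have := bij_eq_card bs; rewrite !card_ord => -[].
case: (posnP (msz G1)) => Hm.
  have Hm2 : msz G2 = 0%N by rewrite -hc.
  rewrite /period_colors Hm Hm2 /=.
  rewrite (wl_one F C init h G1 t _ Hm irr1) (wl_one F C init h G2 t _ Hm2 irr2).
  have -> : (ord0 : 'I_(msz G2).+1) = s ord0.
    by apply: val_inj => /=; have := ltn_ord (s ord0); rewrite {2}Hm2; case: (val (s ord0)).
  by rewrite hf.
have Hm2 : (0 < msz G2)%N by rewrite -hc.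
rewrite (pc_sc F C init h hh G1 t Hm) (pc_sc F C init h hh G2 t Hm2).
rewrite -(permPr (perm_map (sc F C init h G2 t) (perm_bij _ _ s bs))).
have -> : [seq sc F C init h G2 t i | i <- [seq s i | i <- enum 'I_(msz G1).+1]]
  = [seq sc F C init h G1 t i | i <- enum 'I_(msz G1).+1].
  by rewrite -map_comp; apply: eq_map => a /=; rewrite (sc_iso F C init h hh G1 G2 s bs hf hm t).
exact: perm_refl.
Qed.
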